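(* Let $H$ be a real Hilbert space, $C\subseteq H$ a nonempty closed convex set with metric projection $P_C$, and $F\colon H\to H$ a mapping that is monotone ($\langle F(x)-F(y),x-y\rangle\ge 0$ for all $x,y\in H$) and Lipschitz continuous with constant $L>0$. Let $S$ be the (assumed nonempty) set of solutions of the variational inequality: find $x^*\in C$ with $\langle F(x^* ),x-x^*\rangle\ge 0$ for all $x\in C$. Choose $x_0=y_0\in H$ and $\lambda\in\bigl(0,\frac{\sqrt2-1}{L}\bigr)$, and define for $n\ge 0$ $$x_{n+1}=P_C(x_n-\lambda F(y_n)),\qquad y_{n+1}=2x_{n+1}-x_n.$$ Let $z\in S$. Then for every $n\ge 2$, $$\|x_{n+1}-z\|^2\le \|x_n-z\|^2-(1-\lambda L(1+\sqrt2))\|x_n-x_{n-1}\|^2+\lambda L\|x_n-y_{n-1}\|^2-(1-\sqrt2\lambda L)\|x_{n+1}-y_n\|^2-2\lambda\langle F(z),y_n-z\rangle.$$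
   Context: $P_C(x)$ denotes the unique nearest point of $C$ to $x$. *)

(* Defs.v *)
From HB Require Import structures.
From mathcomp Require Import all_boot all_order all_algebra.
From mathcomp Require Import boolp classical_sets reals.
Set Implicit Arguments. Unset Strict Implicit. Unset Printing Implicit Defensive.
Import Order.TTheory GRing.Theory Num.Theory.
Local Open Scope ring_scope.
Local Open Scope classical_set_scope.

Section Hilbert.
Variables (R : realType) (V : lmodType R) (ip : V -> V -> R).

Definition ipnorm (x : V) : R := Num.sqrt (ip x x).

Definition is_inner_product : Prop :=
  [/\ (forall x y, ip x y = ip y x),
      (forall a x y z, ip (a *: x + y) z = a * ip x z + ip y z),
      (forall x, 0 <= ip x x) &
      (forall x, ip x x = 0 -> x = 0)].

Definition ip_cvg (u : nat -> V) (l : V) : Prop :=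
  forall eps : R, 0 < eps -> exists N, forall n, (N <= n)%N -> ipnorm (u n - l) < eps.

Definition ip_cauchy (u : nat -> V) : Prop :=
  forall eps : R, 0 < eps -> exists N, forall m n, (N <= m)%N -> (N <= n)%N ->
    ipnorm (u m - u n) < eps.

Definition is_hilbert : Prop :=
  is_inner_product /\ forall u, ip_cauchy u -> exists l, ip_cvg u l.

Definition closed_set (C : set V) : Prop :=
  forall u l, (forall n, C (u n)) -> ip_cvg u l -> C l.

Definition convex_set (C : set V) : Prop :=
  forall x y (t : R), C x -> C y -> 0 <= t <= 1 -> C (t *: x + (1 - t) *: y).

Definition is_metric_proj (C : set V) (P : V -> V) : Prop :=
  forall x, C (P x) /\ forall c, C c -> ipnorm (x - P x) <= ipnorm (x - c).

Definition monotone_op (F : V -> V) : Prop :=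
  forall x y, 0 <= ip (F x - F y) (x - y).

Definition lipschitz_op (F : V -> V) (L : R) : Prop :=
  forall x y, ipnorm (F x - F y) <= L * ipnorm (x - y).

Definition VI_sol (C : set V) (F : V -> V) : set V :=
  [set xs | C xs /\ forall x, C x -> 0 <= ip (F xs) (x - xs)].

End Hilbert.

(* Main.v *)
Require Import Defs.
From HB Require Import structures.
From mathcomp Require Import all_boot all_order all_algebra.
From mathcomp Require Import boolp classical_sets reals.
From mathcomp Require Import ring lra.
Import Order.TTheory GRing.Theory Num.Theory.
Local Open Scope ring_scope.
Local Open Scope classical_set_scope.

Section Aux.
Variables (R : realType) (V : lmodType R) (ip : V -> V -> R).
Hypothesis HI : is_inner_product ip.

Lemma ipS u v : ip u v = ip v u.
Proof. by case: HI. Qed.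
Lemma ippos u : 0 <= ip u u.
Proof. by case: HI. Qed.
Lemma ipDl u v w : ip (u + v) w = ip u w + ip v w.
Proof. case: HI => _ H _ _; by rewrite -[u]scale1r H mul1r scale1r. Qed.
Lemma ip0l w : ip 0 w = 0.
Proof.
have := ipDl 0 0 w; rewrite addr0 => /eqP.
by rewrite -subr_eq0 opprD addrA subrr sub0r oppr_eq0 => /eqP.
Qed.
Lemma ipZl a u w : ip (a *: u) w = a * ip u w.
Proof. case: HI => _ H _ _; by have := H a u 0 w; rewrite addr0 ip0l addr0. Qed.
Lemma ipNl u w : ip (- u) w = - ip u w.
Proof. by rewrite -scaleN1r ipZl mulN1r. Qed.
Lemma ipDr u v w : ip w (u + v) = ip w u + ip w v.
Proof. by rewrite ipS ipDl !(ipS w). Qed.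
Lemma ipZr a u w : ip w (a *: u) = a * ip w u.
Proof. by rewrite ipS ipZl (ipS w). Qed.
Lemma ipNr u w : ip w (- u) = - ip w u.
Proof. by rewrite ipS ipNl (ipS w). Qed.

Definition ipE := (ipDl, ipDr, ipZl, ipZr, ipNl, ipNr).

Lemma sqr_ipnorm u : ipnorm ip u ^+ 2 = ip u u.
Proof. by rewrite /ipnorm sqr_sqrtr // ippos. Qed.

Lemma quad_eq u w k : ip (u - k *: w) (u - k *: w) =
  ip u u - 2 * k * ip u w + k ^+ 2 * ip w w.
Proof. rewrite !ipE (ipS w u); ring. Qed.

Lemma quad_ge0 u w k : 0 <= ip u u - 2 * k * ip u w + k ^+ 2 * ip w w.
Proof.
have := ippos (u - k *: w); rewrite !ipE (ipS w u); lra.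
Qed.

Lemma proj_ineq C P : convex_set C -> is_metric_proj ip C P ->
  forall v c, C c -> ip (v - P v) (c - P v) <= 0.
Proof.
move=> Hcv HP v c Cc; have [CP Hmin] := HP v.
set p := P v; set J := ip (v - p) (c - p); set K := ip (c - p) (c - p).
have K0 : 0 <= K by apply: ippos.
have key : forall t, 0 < t <= 1 -> 2 * J <= t * K.
  move=> t /andP[t0 t1].
  have Ct : C (t *: c + (1 - t) *: p) by apply: Hcv => //; rewrite ltW.
  have := Hmin _ Ct; rewrite /ipnorm ler_sqrt ?ippos //.
  have -> : v - (t *: c + (1 - t) *: p) = (v - p) - t *: (c - p).
    by rewrite scalerBl scale1r scalerBr !opprD !opprK addrA addrAC -!addrA
      [t *: p + _]addrC.
  rewrite quad_eq -/J -/K => H.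
  have : t * (2 * J) <= t * (t * K) by lra.
  by rewrite ler_pM2l.
rewrite leNgt; apply/negP => J0.
have tpos : 0 < J / (J + K) by rewrite divr_gt0 // ltr_wpDr.
have t1 : J / (J + K) <= 1 by rewrite ler_pdivrMr ?ltr_wpDr // mul1r lerDl.
have := key _ (introT andP (conj tpos t1)) ; rewrite mulrAC.
rewrite ler_pdivlMr ?ltr_wpDr //.
have : 0 < J * J by rewrite mulr_gt0.
have : 0 <= J * K by rewrite mulr_ge0 // ltW.
nra.
Qed.

Lemma young (u w d1 d2 : V) (L r : R) : 0 < L -> 0 < r -> r ^+ 2 = 2 ->
  ip u u <= L ^+ 2 * ip (d1 + d2) (d1 + d2) ->
  2 * ip u w <= L * ((1 + r) * ip d1 d1 + ip d2 d2 + r * ip w w).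
Proof.
move=> L0 r0 r2 HU.
have Y1 := quad_ge0 u w (r * L).
have Y2 := quad_ge0 d2 d1 (1 + r).
have De : ip (d1 + d2) (d1 + d2) = ip d1 d1 + 2 * ip d2 d1 + ip d2 d2.
  by rewrite !ipE (ipS d1 d2); ring.
set A := ip d1 d1 in Y2 De *; set Cd := ip d2 d2 in Y2 De *.
set X := ip d2 d1 in Y2 De; set D := ip (d1 + d2) (d1 + d2) in HU De.
set U := ip u u in Y1 HU *; set I := ip u w in Y1 *; set W := ip w w in Y1 *.
have e1 : (1 + r) ^+ 2 = 3 + 2 * r by rewrite sqrrD r2 expr1n; ring.
have e2 : (r * L) ^+ 2 = 2 * L ^+ 2 by rewrite exprMn r2.
rewrite e1 in Y2; rewrite e2 in Y1.
have hD1 : (1 + r) * D <= (4 + 3 * r) * A + (2 + r) * Cd by rewrite De; lra.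
have hD2 : (4 + 3 * r) * A + (2 + r) * Cd = (1 + r) * ((r + 2) * A + r * Cd).
  have -> : (1 + r) * ((r + 2) * A + r * Cd) =
     (2 + 3 * r) * A + r * Cd + r ^+ 2 * (A + Cd) by ring.
  rewrite r2; ring.
have hD : D <= (r + 2) * A + r * Cd.
  have : (1 + r) * D <= (1 + r) * ((r + 2) * A + r * Cd) by rewrite -hD2.
  by rewrite ler_pM2l // ltr_wpDr // ltW.
have L2 : 0 < L ^+ 2 by rewrite exprn_gt0.
have hU : U <= L ^+ 2 * ((r + 2) * A + r * Cd).
  by apply: (le_trans HU); rewrite ler_pM2l.
have h3 : (r * L) * (2 * I) <= (r * L) * (L * ((1 + r) * A + Cd + r * W)).
  have -> : (r * L) * (L * ((1 + r) * A + Cd + r * W)) =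
     L ^+ 2 * ((r + 2) * A + r * Cd) + 2 * L ^+ 2 * W +
     L ^+ 2 * (r ^+ 2 - 2) * (A + W) by ring.
  rewrite r2 subrr mulr0 mul0r addr0; lra.
by rewrite ler_pM2l ?mulr_gt0 in h3.
Qed.

Lemma key (a b c z g1 g0 gz : V) :
  ip (b - g1 - a) (z - a) <= 0 ->
  ip (c - g0 - b) (a - b) <= 0 ->
  ip (c - g0 - b) (c - b) <= 0 ->
  0 <= ip (g1 - gz) (2 *: b - c - z) ->
  ip (a - z) (a - z) <= ip (b - z) (b - z) - ip (b - c) (b - c)
    - ip (a - (2 *: b - c)) (a - (2 *: b - c))
    - 2 * ip gz (2 *: b - c - z) + 2 * ip (g1 - g0) (2 *: b - c - a).
Proof.
rewrite !ipE.
have := ipS a b; have := ipS a c; have := ipS a z; have := ipS a g1;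
have := ipS a g0; have := ipS a gz; have := ipS b c; have := ipS b z;
have := ipS b g1; have := ipS b g0; have := ipS b gz; have := ipS c z;
have := ipS c g1; have := ipS c g0; have := ipS c gz; have := ipS z g1;
have := ipS z g0; have := ipS z gz; have := ipS g1 g0; have := ipS g1 gz;
have := ipS g0 gz.
lra.
Qed.
End Aux.
Theorem lemma3p2 (R : realType) (V : lmodType R) (ip : V -> V -> R)
  (HV : is_hilbert ip)
  (C : set V) (HC0 : C !=set0) (HCcl : closed_set ip C) (HCcv : convex_set C)
  (P : V -> V) (HP : is_metric_proj ip C P)
  (F : V -> V) (L : R) (HL : 0 < L) (Hmon : monotone_op ip F)
  (Hlip : lipschitz_op ip F L)
  (HS : VI_sol ip C F !=set0)
  (x y : nat -> V) (lambda : R)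
  (Hx0 : x 0%N = y 0%N)
  (Hlam : 0 < lambda < (Num.sqrt 2 - 1) / L)
  (Hxrec : forall n, x n.+1 = P (x n - lambda *: F (y n)))
  (Hyrec : forall n, y n.+1 = 2 *: x n.+1 - x n)
  (z : V) (Hz : VI_sol ip C F z)
  (n : nat) (Hn : (2 <= n)%N) :
  ipnorm ip (x n.+1 - z) ^+ 2 <=
    ipnorm ip (x n - z) ^+ 2
    - (1 - lambda * L * (1 + Num.sqrt 2)) * ipnorm ip (x n - x n.-1) ^+ 2
    + lambda * L * ipnorm ip (x n - y n.-1) ^+ 2
    - (1 - Num.sqrt 2 * lambda * L) * ipnorm ip (x n.+1 - y n) ^+ 2
    - 2 * lambda * ip (F z) (y n - z).
Proof.
case: HV => HI _.
case: n Hn => [|[|m]] // _ /=.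
have CP : forall k, C (x k.+1) by move=> k; rewrite Hxrec; case: (HP (x k - lambda *: F (y k))).
have [Cz _] := Hz.
have P1 := @proj_ineq _ _ _ HI _ _ HCcv HP (x m.+2 - lambda *: F (y m.+2)) _ Cz.
have P2 := @proj_ineq _ _ _ HI _ _ HCcv HP (x m.+1 - lambda *: F (y m.+1)) _ (CP m.+2).
have P3 := @proj_ineq _ _ _ HI _ _ HCcv HP (x m.+1 - lambda *: F (y m.+1)) _ (CP m).
rewrite -!Hxrec in P1 P2 P3.
have M := Hmon (y m.+2) z.
have Hy2 := Hyrec m.+1.
have [l0 _] := andP Hlam.
have M' : 0 <= ip (lambda *: F (y m.+2) - lambda *: F z) (y m.+2 - z).
  by rewrite -scalerBr ipZl // mulr_ge0 // ltW.
rewrite {2}Hy2 in M'.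
have K := @key _ _ _ HI
  (x m.+3) (x m.+2) (x m.+1) z (lambda *: F (y m.+2))
  (lambda *: F (y m.+1)) (lambda *: F z).
have K' := K P1 P2 P3 M'.
set r := Num.sqrt 2.
have r0 : 0 < r by rewrite sqrtr_gt0.
have r2 : r ^+ 2 = 2 by rewrite sqr_sqrtr.
have Lip := Hlip (y m.+2) (y m.+1).
have HU : ip (F (y m.+2) - F (y m.+1)) (F (y m.+2) - F (y m.+1)) <=
   L ^+ 2 * ip ((x m.+2 - x m.+1) + (x m.+2 - y m.+1)) ((x m.+2 - x m.+1) + (x m.+2 - y m.+1)).
  have -> : (x m.+2 - x m.+1) + (x m.+2 - y m.+1) = y m.+2 - y m.+1.
    by rewrite Hy2 scaler_nat mulr2n addrA; congr (_ - _); rewrite addrAC.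
  rewrite -!sqr_ipnorm // -exprMn.
  have p0 : 0 <= ipnorm ip (F (y m.+2) - F (y m.+1)) by rewrite /ipnorm sqrtr_ge0.
  move: Lip p0; set p := ipnorm _ _; set q := L * _ => Lip p0.
  rewrite !expr2; nra.
have Y := @young _ _ _ HI _ (2 *: x m.+2 - x m.+1 - x m.+3) _ _ _ _ HL r0 r2 HU.
have Y' := Y; rewrite -(@ler_pM2l _ lambda) // in Y'.
rewrite -scalerBr ipZl // ipZl // in K'.
have e : ip (x m.+3 - (2 *: x m.+2 - x m.+1)) (x m.+3 - (2 *: x m.+2 - x m.+1)) =
  ip (2 *: x m.+2 - x m.+1 - x m.+3) (2 *: x m.+2 - x m.+1 - x m.+3).
  by rewrite -opprB ipNl // ipNr // opprK.
rewrite e in K'.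
rewrite !sqr_ipnorm // Hy2 -/r e.
lra.
Qed.
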